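(* Let $k\ge1$ and let $f:\mathbb{N}^k\to\mathbb{N}$ be bad. Then $f\notin\mathscr{C}_{I_{\bar d=0}}$.
   Context: $\mathbb{N}=\{0,1,2,\dots\}$. For $A\subseteq\mathbb{N}$, $\bar d(A)=\limsup_{n\to\infty}\frac{|A\cap[0,n)|}{n}$. $\mathscr{C}_{I_{\bar d=0}}$ is the set of all finitary functions $f:\mathbb{N}^k\to\mathbb{N}$ ($k\ge1$) such that $\bar d(f[A^k])=0$ whenever $\bar d(A)=0$. A function $f:\mathbb{N}^k\to\mathbb{N}$ is called bad if there exists a rational $\varepsilon>0$ such that for every $i\in\mathbb{N}$ there are $n,t\ge i$ and $A\subseteq[i,n)$ with $|A\cap[0,r)|\le\frac{r}{2^i}$ for all $r\in\mathbb{N}$ and $|f[A^k]\cap[0,t)|\ge\varepsilon t$. *)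

(* Defs.v *)
From HB Require Import structures.
From mathcomp Require Import all_boot all_order all_algebra.
From mathcomp Require Import all_classical all_reals.
From mathcomp Require Import ereal topology sequences.
Set Implicit Arguments. Unset Strict Implicit. Unset Printing Implicit Defensive.
Import Order.TTheory GRing.Theory Num.Theory.
Local Open Scope classical_set_scope.
Local Open Scope ring_scope.

Definition cnt (A : set nat) (n : nat) : nat :=
  (\sum_(0 <= i < n) (if `[< A i >] then 1 else 0))%N.

Definition upper_density (R : realType) (A : set nat) : \bar R :=
  limn_esup (fun n : nat => ((cnt A n)%:R / n%:R : R)%:E).

(* f[A^k] for f : ℕ^k -> ℕ (ℕ^k represented as 'I_k -> nat) *)
Definition img (k : nat) (f : ('I_k -> nat) -> nat) (A : set nat) : set nat :=
  [set f x | x in [set x : 'I_k -> nat | forall i, A (x i)]].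

Definition in_C_dbar0 (R : realType) (k : nat) (f : ('I_k -> nat) -> nat) : Prop :=
  forall A : set nat, upper_density R A = 0%E ->
    upper_density R (img f A) = 0%E.

Definition bad (k : nat) (f : ('I_k -> nat) -> nat) : Prop :=
  exists eps : rat, 0 < eps /\
    forall i : nat, exists n t : nat, (i <= n)%N /\ (i <= t)%N /\
      exists A : set nat, A `<=` [set m | (i <= m < n)%N] /\
        (forall r : nat, ((cnt A r)%:R : rat) <= r%:R / (2 ^+ i)) /\
        eps * t%:R <= ((cnt (img f A) t)%:R : rat).

(* Main.v *)
Require Import Defs.
From mathcomp Require Import all_boot all_order all_algebra.
From mathcomp Require Import all_classical all_reals.
From mathcomp Require Import ereal topology sequences normedtype.
From mathcomp Require Import zify ring lra.
Set Implicit Arguments. Unset Strict Implicit. Unset Printing Implicit Defensive.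
Import Order.TTheory GRing.Theory Num.Theory numFieldNormedType.Exports.
Local Open Scope classical_set_scope.

Lemma cntS (A : set nat) r : cnt A r.+1 = cnt A r + (if `[< A r >] then 1 else 0).
Proof. by rewrite /cnt big_nat_recr. Qed.

Lemma cnt_sub (A B : set nat) r : A `<=` B -> cnt A r <= cnt B r.
Proof.
move=> AB; rewrite /cnt; apply: leq_sum => i _.
by case: (asboolP (A i)) => // /AB Bi; rewrite (asboolT Bi).
Qed.

Lemma cnt_U (A B : set nat) r : cnt (A `|` B) r <= cnt A r + cnt B r.
Proof.
rewrite /cnt -big_split /=; apply: leq_sum => i _.
case: (asboolP ((A `|` B) i)) => // -[] H.
  by rewrite (asboolT H).
by rewrite (asboolT H) addn1.
Qed.

Lemma cnt_le_N (A : set nat) N r : A `<=` [set m | m < N] -> cnt A r <= N.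
Proof.
move=> AN; suff : cnt A r <= minn r N by lia.
elim: r => [|r IH]; first by rewrite /cnt big_geq.
rewrite cntS; case: (asboolP (A r)) => [/AN /= rN|_]; lia.
Qed.

Lemma cnt0 (A : set nat) r : (forall m, A m -> r <= m) -> cnt A r = 0.
Proof.
move=> H; rewrite /cnt big_nat_cond big1 // => i /andP[/andP[_ ir] _].
by case: (asboolP (A i)) => // /H; lia.
Qed.

Section Comb.
Variables (Bs : nat -> set nat) (Ns : nat -> nat).
Hypothesis hsub : forall j, Bs j `<=` [set m | j <= m < Ns j].
Hypothesis hcnt : forall j r, cnt (Bs j) r * 2 ^ j <= r.

Definition Tl J := [set m | exists2 j, J <= j & Bs j m].

Lemma Tl_split J : Tl J `<=` Bs J `|` Tl J.+1.
Proof.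
move=> m [j Jj Bm]; have [eq|ne] := eqVneq j J; first by left; rewrite -eq.
by right; exists j => //; lia.
Qed.

Lemma tail_bound d : forall J r, r <= J + d -> cnt (Tl J) r * 2 ^ J <= 2 * r.
Proof.
elim: d => [|d IH] J r rJ.
  rewrite cnt0 // => m [j Jj /hsub /= /andP[jm _]]; lia.
have h1 := hcnt J r.
have h2 := @IH J.+1 r ltac:(lia).
have h3 : cnt (Tl J) r <= cnt (Bs J) r + cnt (Tl J.+1) r.
  exact: leq_trans (cnt_sub _ (@Tl_split J)) (cnt_U _ _ _).
rewrite expnS in h2.
have := leq_mul h3 (leqnn (2 ^ J)).
move: h1 h2; set a := cnt (Bs J) r; set b := cnt (Tl J.+1) r; set c := cnt (Tl J) r;
  set P := 2 ^ J => h1 h2 h4.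
nia.
Qed.

Lemma head_bound J r : cnt (Tl 0) r <= \sum_(j < J) Ns j + cnt (Tl J) r.
Proof.
elim: J => [|J IH]; first by rewrite big_ord0.
rewrite big_ord_recr /=.
have h3 : cnt (Tl J) r <= cnt (Bs J) r + cnt (Tl J.+1) r.
  exact: leq_trans (cnt_sub _ (@Tl_split J)) (cnt_U _ _ _).
have h4 : cnt (Bs J) r <= Ns J.
  by apply: cnt_le_N => m /hsub /= /andP[].
rewrite -addnA; apply: leq_trans IH _; rewrite leq_add2l; lia.
Qed.

Lemma total_bound J r :
  cnt (Tl 0) r * 2 ^ J <= (\sum_(j < J) Ns j) * 2 ^ J + 2 * r.
Proof.
have h1 := head_bound J r.
have h2 := @tail_bound r J r ltac:(lia).
have := leq_mul h1 (leqnn (2 ^ J)).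
move: h2; set a := cnt (Tl 0) r; set b := cnt (Tl J) r; set C := \sum_(j < J) Ns j;
  set P := 2 ^ J => h2 h3.
nia.
Qed.

End Comb.

Lemma img_sub k (f : ('I_k -> nat) -> nat) (A B : set nat) :
  B `<=` A -> img f B `<=` img f A.
Proof. by move=> BA y [x hx <-]; exists x => // i; apply: BA (hx i). Qed.

Theorem mainTheorem3 (R : realType) (k : nat) (f : ('I_k -> nat) -> nat) :
  (1 <= k)%N -> bad f -> ~ in_C_dbar0 R f.
Proof.
move=> _ [eps [eps0 Hb]] HC.
have Hc : forall i, exists p : nat * nat * set nat,
  [/\ i <= p.1.1, i <= p.1.2, p.2 `<=` [set m | i <= m < p.1.1],
      (forall r, ((cnt p.2 r)%:R : rat) <= r%:R / (2 ^+ i))%R &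
      (eps * (p.1.2)%:R <= ((cnt (img f p.2) p.1.2)%:R : rat))%R].
  move=> i; have [n [t [hn [ht [A [hA [hc he]]]]]]] := Hb i.
  by exists (n, t, A).
have [g hg] := choice Hc.
pose Bs j := (g j).2; pose Ns j := (g j).1.1; pose Ts j := (g j).1.2.
have hsub : forall j, Bs j `<=` [set m | j <= m < Ns j].
  by move=> j; have [] := hg j.
have hcnt : forall j r, cnt (Bs j) r * 2 ^ j <= r.
  move=> j r; have [_ _ _ h _] := hg j; have := h r.
  rewrite -(ler_nat rat) natrM natrX ler_pdivlMr //; exact: exprn_gt0.
pose A := Tl Bs 0.
have dA : upper_density R A = 0%E.
  rewrite /upper_density; apply: (cvg_limn_einf_sup _).2.
  apply/fine_cvgP; split; first exact: nearW.
  apply/cvgrPdist_le => e e0.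
  have [J hJ] : exists J : nat, (4 / e < (2 ^ J)%:R)%R.
    exists (Num.bound (4 / e)); apply: lt_le_trans (archi_boundP _) _.
      by rewrite divr_ge0 // ltW.
    by rewrite ler_nat; exact/ltnW/ltn_expl.
  pose C := \sum_(j < J) Ns j.
  have [M hM] : exists M : nat, ((2 * C%:R) / e < M%:R)%R.
    exists (Num.bound ((2 * C%:R) / e)); apply: archi_boundP.
    by rewrite divr_ge0 // ltW.
  exists (maxn M 1) => // r /= hr.
  have hb := total_bound hsub hcnt J r.
  rewrite sub0r normrN ger0_norm ?divr_ge0 //.
  rewrite ler_pdivrMr ?ltr0n; last by lia.
  move: hb; rewrite -(ler_nat R) natrD !natrM => hb.
  rewrite ltr_pdivrMr // in hJ.
  rewrite ltr_pdivrMr // in hM.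
  have hMr : (M%:R <= r%:R :> R)%R by rewrite ler_nat; lia.
  move: hb hJ hM hMr; rewrite -/C -/A.
  set c := ((cnt A r)%:R)%R; set P := ((2 ^ J)%:R)%R; set CR := (C%:R)%R; set rR := (r%:R)%R; set MR := (M%:R)%R.
  move=> hb hJ hM hMr.
  have P0 : (0 < P)%R by rewrite /P ltr0n expn_gt0.
  have r0 : (0 <= rR)%R by rewrite /rR ler0n.
  have h1 : (2 * CR <= rR * e)%R.
    apply: le_trans (ltW hM) _; rewrite ler_wpM2r // ltW //.
  have h2 : (4 * rR <= P * e * rR)%R by rewrite ler_wpM2r // ltW.
  have h3 : (2 * CR * P <= rR * e * P)%R by rewrite ler_wpM2r // ltW.
  have h4 : (c * P <= (e * rR) * P)%R by lra.
  by rewrite -(ler_pM2r P0).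
have dI := HC A dA.
have cv : (fun n => ((cnt (img f A) n)%:R / n%:R : R)%:E) @ \oo --> 0%E.
  apply: limn_esup_le_cvg.
    by rewrite /upper_density in dI; rewrite dI.
  by move=> n; rewrite lee_fin divr_ge0.
move/fine_cvgP: cv => [_ cv].
have eR0 : (0 < ratr eps :> R)%R by rewrite ltr0q.
have [N _ HN] := (proj1 (cvgrPdist_lt _ _) cv) _ eR0.
pose j := N.+1; pose t := Ts j.
have [_ ht _ _ he] := hg j.
have tN : N <= t by rewrite /t /Ts; lia.
have := HN t tN.
rewrite /= sub0r normrN ger0_norm ?divr_ge0 //.
rewrite ltr_pdivrMr ?ltr0n; last by rewrite /t /Ts; lia.
have hsubA : img f (Bs j) `<=` img f A.
  by apply: img_sub => m Bm; exists j.
have hc := cnt_sub t hsubA.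
have : (ratr eps * t%:R <= (cnt (img f (Bs j)) t)%:R :> R)%R.
  by move: he; rewrite -(@ler_rat R) rmorphM /= !ratr_nat.
have : ((cnt (img f (Bs j)) t)%:R <= (cnt (img f A) t)%:R :> R)%R.
  by rewrite ler_nat.
move=> h1 h2 h3; have := lt_le_trans h3 (le_trans h2 h1).
by rewrite ltxx.
Qed.
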